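(* Let $G=(N,A)$ be an $s$-$t$ directed graph and let $u,v\in N$. Suppose that $u$ $s$-dominates $v$ and that $v$ does not $t$-dominate $u$. Then every node $w$ that is $t$-dominated by $v$ is strictly $s$-dominated by $u$.
   Context: An $s$-$t$ directed graph is a directed graph (not necessarily acyclic) with a unique source $s$ and a unique sink $t$ such that every node is reachable from $s$ and every node reaches $t$. A node $a$ $s$-dominates $b$ if every $s$-$b$ path contains $a$ (every node $s$-dominates itself); $a$ strictly $s$-dominates $b$ if moreover $a\neq b$. A node $a$ $t$-dominates $b$ (equivalently, $b$ is $t$-dominated by $a$) if every $b$-$t$ path contains $a$. *)

(* Defs.v *)
From mathcomp Require Import all_boot.
Set Implicit Arguments. Unset Strict Implicit. Unset Printing Implicit Defensive.

(* A path from x is encoded as x :: p with path e x p (arcs between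
   consecutive nodes); it ends at last x p; its node set is x :: p. *)

(* s-t directed graph: s is a source (no incoming arc), t is a sink
   (no outgoing arc), every node is reachable from s and reaches t.
   (Uniqueness of the source/sink follows from the reachability conditions.) *)
Definition st_graph (T : finType) (e : rel T) (s t : T) : Prop :=
  [/\ forall x, ~~ e x s,
      forall x, ~~ e t x,
      forall x, connect e s x
    & forall x, connect e x t].

Definition sdom (T : finType) (e : rel T) (s a b : T) : Prop :=
  forall p : seq T, path e s p -> last s p = b -> a \in s :: p.

Definition tdom (T : finType) (e : rel T) (t a b : T) : Prop :=
  forall p : seq T, path e b p -> last b p = t -> a \in b :: p.

(* Main.v *)
Require Import Defs.
From mathcomp Require Import all_boot.
From Stdlib Require Import Classical.

Lemma aux (T : finType) (e : rel T) (t u v : T) q :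
  path e u q -> last u q = t -> v \notin u :: q ->
  forall r x, path e x r -> last x r = t ->
  (exists r', [/\ path e x r', last x r' = v & u \notin x :: r'])
  \/ (exists r', [/\ path e x r', last x r' = t & v \notin x :: r']).
Proof.
move=> pq lq vq; elim=> [|y r IH] x.
- move=> _ /= xt.
  case: (eqVneq x u) => [->|nxu]; first by right; exists q.
  case: (eqVneq x v) => [<-|nxv]; first by left; exists [::]; split => //=; rewrite inE eq_sym.
  by right; exists [::]; split => //=; rewrite inE eq_sym.
- rewrite /= => /andP [exy pr] lr.
  case: (eqVneq x u) => [->|nxu]; first by right; exists q.
  case: (eqVneq x v) => [<-|nxv]; first by left; exists [::]; split => //=; rewrite inE eq_sym.
  case: (IH y pr lr) => [[r' [p1 l1 n1]]|[r' [p1 l1 n1]]].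
  + by left; exists (y :: r'); rewrite /= exy p1 l1 inE negb_or n1 eq_sym nxu.
  + by right; exists (y :: r'); rewrite /= exy p1 l1 inE negb_or n1 eq_sym nxv.
Qed.

Theorem lemma8 (T : finType) (e : rel T) (s t u v : T) :
  st_graph e s t ->
  sdom e s u v ->
  ~ tdom e t v u ->
  forall w : T, tdom e t v w -> sdom e s u w /\ u <> w.
Proof.
move=> [_ _ _ reach] suv ntvu w tvw.
have [q [pq lq vq]] : exists q, [/\ path e u q, last u q = t & v \notin u :: q].
  apply: NNPP => H; apply: ntvu => q pq lq.
  case: (boolP (v \in u :: q)) => // vq; exfalso; apply: H; by exists q.
split; last by move=> euw; apply: ntvu; rewrite euw.
move=> p pp lp; case: (boolP (u \in s :: p)) => // nu; exfalso.
have /connectP [r pr lr] := reach w.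
case: (@aux T e t u v q pq lq vq r w pr (esym lr)) => [[r' [p1 l1 n1]]|[r' [p1 l1 n1]]].
- have := suv (p ++ r'); rewrite cat_path pp lp p1 last_cat lp l1 => /(_ isT erefl).
  rewrite -cat_cons mem_cat (negbTE nu) /=.
  by move: n1; rewrite inE negb_or => /andP [_ /negbTE ->].
- by move: n1; rewrite (tvw r' p1 l1).
Qed.
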